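(* Let $G$ be a graph, $k\ge1$, and $S,T$ independent sets of $G$ of size $k$. Let $\mathcal{F}$ be a family of independent sets of $G$, each of size at least $k$, with $S,T\in\mathcal{F}$. Let $\mathcal{G}$ be the graph with vertex set $\mathcal{F}$ in which distinct $I,I'\in\mathcal{F}$ are adjacent iff $|I\cap I'|\ge k-1$. If there is a path from $S$ to $T$ in $\mathcal{G}$, then there is a token jumping reconfiguration sequence from $S$ to $T$ in $G$.
   Context: A token jumping reconfiguration sequence from $S$ to $T$ is a finite sequence $S=I_0,\dots,I_m=T$ of independent sets of $G$ of size $k$ with each $I_{j+1}=(I_j\setminus\{u\})\cup\{v\}$ for some $u\in I_j$, $v\in V(G)\setminus I_j$. In the paper, $\mathcal{F}$ is obtained from an independence covering family for $(G,k)$ by deleting the members of size less than $k$ and adding $S$ and $T$. *)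

(* Defs.v *)
From mathcomp Require Import all_boot.
Set Implicit Arguments. Unset Strict Implicit. Unset Printing Implicit Defensive.

(* A (finite simple) graph on vertex type V is given by an adjacency relation
   e : rel V, assumed symmetric and irreflexive in the theorem. *)

Definition independent (V : finType) (e : rel V) (A : {set V}) : bool :=
  [forall x in A, forall y in A, ~~ e x y].

Definition tj_step (V : finType) (I J : {set V}) : Prop :=
  exists u v, [/\ u \in I, v \notin I & J = (I :\ u) :|: [set v]].

Definition tj_reconf (V : finType) (e : rel V) (k : nat) (S T : {set V}) : Prop :=
  exists s : seq {set V},
    [/\ last S s = T,
        (forall I, I \in S :: s -> independent e I /\ #|I| = k) &
        (forall i, i < size s -> tj_step (nth S (S :: s) i) (nth S (S :: s) i.+1))].

Definition aux_adj (V : finType) (k : nat) (I J : {set V}) : bool :=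
  (I != J) && (k.-1 <= #|I :&: J|).

(* Main.v *)
Require Import Defs.
From mathcomp Require Import all_boot zify.
Set Implicit Arguments. Unset Strict Implicit. Unset Printing Implicit Defensive.

Definition good (V : finType) (e : rel V) (k : nat) (X : {set V}) :=
  independent e X /\ #|X| = k.

Inductive reach (V : finType) (e : rel V) (k : nat) : {set V} -> {set V} -> Prop :=
| R0 X : good e k X -> reach e k X X
| RS X X' Y : good e k X -> tj_step X X' -> reach e k X' Y -> reach e k X Y.

Lemma reach_tj (V : finType) (e : rel V) k X Y : reach e k X Y -> tj_reconf e k X Y.
Proof.
elim=> {X Y} [X [hI hK] | X X' Y [hI hK] hst _ [s [hl hm hs]]].
- exists [::]; split => //. move=> I; rewrite inE => /eqP -> //.
- exists (X' :: s); split => //.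
  + move=> I; rewrite in_cons => /orP [/eqP -> // | hI']; exact: hm.
  + case=> [|j] /= hj; first done.
    have h1 : nth X (X'::s) j = nth X' (X'::s) j by apply: set_nth_default; simpl; lia.
    have h2 : nth X s j = nth X' (X'::s) j.+1 by apply: set_nth_default; simpl; lia.
    rewrite h1 h2; apply: hs; lia.
Qed.

Lemma reach_trans (V : finType) (e : rel V) k X Y Z :
  reach e k X Y -> reach e k Y Z -> reach e k X Z.
Proof.
elim=> {X Y} // X X' Y gX st _ IH hYZ.
exact: (RS gX st (IH hYZ)).
Qed.

Lemma indep_sub (V : finType) (e : rel V) (A B : {set V}) :
  A \subset B -> independent e B -> independent e A.
Proof.
move=> sAB /forall_inP hB; apply/forall_inP => x xA; apply/forall_inP => y yA.
have /forall_inP := hB x (subsetP sAB x xA); apply; exact: (subsetP sAB y yA).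
Qed.

Lemma eq_of_diff0 (V : finType) (X Y : {set V}) :
  #|X| = #|Y| -> #|X :\: Y| = 0 -> X = Y.
Proof.
move=> hc hd. have sXY : X \subset Y by rewrite -setD_eq0 -cards_eq0 hd.
apply/eqP; rewrite eqEcard sXY hc leqnn //.
Qed.

Lemma step_lem (V : finType) (X Y : {set V}) :
  #|X| = #|Y| -> X != Y ->
  exists u v, [/\ u \in X, u \notin Y, v \in Y, v \notin X &
    #|(X :\ u) :|: [set v]| = #|X| /\
    #|((X :\ u) :|: [set v]) :\: Y| = (#|X :\: Y|).-1].
Proof.
move=> hc hne.
have h0 : 0 < #|X :\: Y|.
  rewrite lt0n; apply/negP => /eqP h; move/eqP: hne; apply; exact: eq_of_diff0.
have h1 : 0 < #|Y :\: X| by rewrite cardsD setIC -hc -cardsD.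
case/card_gt0P: h0 => u; rewrite inE => /andP [uY uX].
case/card_gt0P: h1 => v; rewrite inE => /andP [vX vY].
exists u, v; split => //; split.
- rewrite setUC cardsU1 !inE (negbTE vX) andbF /= (cardsD1 u X) uX; lia.
- have -> : ((X :\ u) :|: [set v]) :\: Y = (X :\: Y) :\ u.
    apply/setP => z; rewrite !inE.
    case: (z =P v) => [->|_]; first by rewrite vY (negbTE vX) /= !andbF.
    by rewrite orbF; case: (z \in Y); case: (z \in X); case: (z == u).
  rewrite (cardsD1 u (X :\: Y)) !inE uX uY /=; lia.
Qed.

Lemma sub_card (V : finType) (C : {set V}) n :
  n <= #|C| -> exists B : {set V}, B \subset C /\ #|B| = n.
Proof.
elim: n => [|n IH] hn; first by exists set0; split; [exact: sub0set | exact: cards0].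
case: IH; first lia.
move=> B [sB cB].
have : 0 < #|C :\: B| by rewrite cardsD (setIidPr sB); lia.
case/card_gt0P => x; rewrite inE => /andP [xB xC].
exists (x |: B); split; first by rewrite subUset sub1set xC sB.
rewrite cardsU1 xB cB //.
Qed.

Lemma within (V : finType) (e : rel V) k (J Y : {set V}) :
  independent e J -> Y \subset J -> #|Y| = k ->
  forall n X, #|X :\: Y| <= n -> X \subset J -> #|X| = k -> reach e k X Y.
Proof.
move=> hJ sY cY; elim=> [|n IH] X hn sX cX.
  have -> : X = Y by apply: eq_of_diff0; lia.
  apply: R0; split => //; exact: indep_sub sY hJ.
case: (eqVneq X Y) => [->|hne].
  apply: R0; split => //; exact: indep_sub sY hJ.
have [u [v [uX uY vY vX [c1 c2]]]] := step_lem (etrans cX (esym cY)) hne.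
apply: (@RS _ _ _ X ((X :\ u) :|: [set v])).
- split => //; exact: indep_sub sX hJ.
- exists u, v; split => //.
- apply: IH; [lia | | lia].
  apply/subsetP => z; rewrite !inE => /orP [/andP [_ zX] | /eqP ->].
  + exact: (subsetP sX).
  + exact: (subsetP sY).
Qed.

Lemma adj (V : finType) (e : rel V) k (X Y : {set V}) :
  good e k X -> good e k Y -> k.-1 <= #|X :&: Y| -> reach e k X Y.
Proof.
move=> [iX cX] [iY cY] hI.
case: (eqVneq X Y) => [->|hne]; first by apply: R0.
have [u [v [uX uY vY vX [c1 c2]]]] := step_lem (etrans cX (esym cY)) hne.
have hd : #|X :\: Y| <= 1 by rewrite cardsD; lia.
have -> : Y = (X :\ u) :|: [set v] by apply: esym; apply: eq_of_diff0; lia.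
apply: (@RS _ _ _ X ((X :\ u) :|: [set v])) => //.
- exists u, v; split => //.
- apply: R0; split; last lia.
  have <- : Y = (X :\ u) :|: [set v] by apply: esym; apply: eq_of_diff0; lia.
  done.
Qed.

Lemma path_reach (V : finType) (e : rel V) k (hk : 1 <= k) (F : {set {set V}})
  (hF : forall I, I \in F -> independent e I /\ k <= #|I|) :
  forall p J, J \in F -> all (fun I => I \in F) p -> path (@aux_adj V k) J p ->
  forall X Y : {set V}, X \subset J -> #|X| = k -> Y \subset last J p -> #|Y| = k ->
  reach e k X Y.
Proof.
elim=> [|J1 p IH] J hJ /= hall hpath X Y sX cX sY cY.
  have [iJ _] := hF J hJ.
  exact: (within iJ sY cY (leqnn _) sX cX).
case/andP: hall => hJ1 hall; case/andP: hpath => /andP [_ hI] hpath.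
have [iJ kJ] := hF J hJ; have [iJ1 kJ1] := hF J1 hJ1.
have [A [sA cA]] := sub_card hI.
have sAJ : A \subset J by apply: (subset_trans sA); apply: subsetIl.
have sAJ1 : A \subset J1 by apply: (subset_trans sA); apply: subsetIr.
have : 0 < #|J :\: A| by rewrite cardsD (setIidPr sAJ) cA; move: (#|J|) kJ hk => m; clear; lia.
case/card_gt0P => x; rewrite inE => /andP [xA xJ].
have : 0 < #|J1 :\: A| by rewrite cardsD (setIidPr sAJ1) cA; move: (#|J1|) kJ1 hk => m; clear; lia.
case/card_gt0P => y; rewrite inE => /andP [yA yJ1].
have sX0 : x |: A \subset J by rewrite subUset sub1set xJ sAJ.
have sY0 : y |: A \subset J1 by rewrite subUset sub1set yJ1 sAJ1.
have cX0 : #|x |: A| = k by rewrite cardsU1 xA cA; move: hk; clear; lia.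
have cY0 : #|y |: A| = k by rewrite cardsU1 yA cA; move: hk; clear; lia.
have r1 : reach e k X (x |: A) := within iJ sX0 cX0 (leqnn _) sX cX.
have r3 : reach e k (y |: A) Y := IH J1 hJ1 hall hpath (y |: A) Y sY0 cY0 sY cY.
apply: (reach_trans r1); apply: (reach_trans _ r3).
apply: adj.
- split => //; exact: indep_sub sX0 iJ.
- split => //; exact: indep_sub sY0 iJ1.
- rewrite -cA; apply: subset_leq_card; rewrite subsetI !subsetUr //.
Qed.

Theorem lemma7p1 (V : finType) (e : rel V)
  (e_sym : symmetric e) (e_irr : irreflexive e)
  (k : nat) (hk : 1 <= k) (S T : {set V})
  (hS : independent e S) (hSk : #|S| = k)
  (hT : independent e T) (hTk : #|T| = k)
  (F : {set {set V}})
  (hF : forall I, I \in F -> independent e I /\ k <= #|I|)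
  (hSF : S \in F) (hTF : T \in F) :
  (exists p : seq {set V},
     [/\ all (fun I => I \in F) p, path (@aux_adj V k) S p & last S p = T]) ->
  tj_reconf e k S T.
Proof.
case=> p [hall hpath hlast].
apply: reach_tj.
apply: (path_reach hk hF hSF hall hpath (subxx S) hSk _ hTk).
by rewrite hlast.
Qed.
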